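(* Let $G$ be a finite group, let $K$ be a normal solvable subgroup of $G$, and let $p \in \pi(G)$. If $d_G(p) < |H(p,G)|$, then $p \notin \pi(K)$.
   Context: For a finite group $X$, $\pi(X)$ is the set of prime divisors of $|X|$, and for a positive integer $a$, $\pi(a)$ is the set of prime divisors of $a$. The prime graph $GK(G)$ of $G$ has vertex set $\pi(G)$, with distinct vertices $p,q$ adjacent iff $G$ contains an element of order $pq$; $d_G(p)$ denotes the degree of the vertex $p$ in $GK(G)$. For $p \in \pi(G)$, $w_G(p) = \max\{ i : p^i \mid |G|\}$. For $p\in\pi(G)$ with $m = w_G(p)$, define $$\theta(p) = \pi(G) \setminus \Big(\{p\} \cup \bigcup_{i=1}^{m} \pi(p^i-1)\Big), \qquad \bar\theta(p) = \pi(G)\setminus\big(\{p\}\cup \pi(p^m-1)\big),$$ and $$H(p,G) = \{ q \in \theta(p) \;:\; p \in \bar\theta(q)\}.$$ *)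

(* Defs.v *)
From mathcomp Require Import all_boot all_fingroup all_solvable.
Set Implicit Arguments. Unset Strict Implicit. Unset Printing Implicit Defensive.

Section PrimeGraph.
Variable gT : finGroupType.
Implicit Types G : {group gT}.

Definition piG G : seq nat := primes #|G|.

Definition gk_adj G (p q : nat) : bool :=
  (p != q) && [exists x in G, #[x]%g == p * q].

Definition gk_deg G (p : nat) : nat := count (gk_adj G p) (piG G).

Definition wG G (p : nat) : nat := logn p #|G|.

Definition theta G (p : nat) : seq nat :=
  [seq q <- piG G | (q != p) &&
     [forall i : 'I_(wG G p), q \notin primes (p ^ i.+1 - 1)]].

Definition thetabar G (p : nat) : seq nat :=
  [seq q <- piG G | (q != p) && (q \notin primes (p ^ wG G p - 1))].

Definition Hset G (p : nat) : seq nat :=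
  [seq q <- theta G p | p \in thetabar G q].

End PrimeGraph.

(* Main.v *)
Require Import Defs.
From mathcomp Require Import all_boot all_fingroup all_solvable.
Set Implicit Arguments. Unset Strict Implicit. Unset Printing Implicit Defensive.

Section Aux.
Variable gT : finGroupType.
Local Open Scope group_scope.

Lemma fix_elt (V : {group gT}) (y : gT) q :
  prime q -> q.-elt y -> y \in 'N(V) -> ~~ (q %| #|V| - 1)%N ->
  exists2 v, v \in V & (v != 1) /\ (commute v y).
Proof.
move=> qP qy nVy ndv.
have acts : [acts <[y]>, on V | 'J] by rewrite astabsJ cycle_subG.
have := pgroup_fix_mod qy acts.
rewrite /= afixJ cent_cycle => hmod.
have : ('C_V[y])%G != 1 :> {set gT}.
  apply/negP; rewrite trivg_card1 => /eqP c1.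
  move: hmod; rewrite /= c1 => /eqP; rewrite eqn_mod_dvd ?cardG_gt0 //.
  by move/negP: ndv.
case/trivgPn => v /setIP [vV /cent1P cvy] v1.
by exists v.
Qed.

Lemma prime_dvd_pnat p n : prime p -> p.-nat n -> 1 < n -> p %| n.
Proof.
move=> pP /p_natP [k ->]; case: k => [|k] //= _.
by rewrite expnS dvdn_mulr.
Qed.

Lemma order_mul_pq p q (v y : gT) : prime p -> prime q -> p != q ->
  p.-elt v -> q.-elt y -> v != 1 -> y != 1 -> commute v y ->
  (p * q %| #[v * y])%N.
Proof.
move=> pP qP pq pv qy v1 y1 cvy.
rewrite orderM //; last first.
  apply: pnat_coprime pv _; apply: sub_in_pnat qy => r _.
  by rewrite !inE => /eqP ->; rewrite eq_sym.
apply: dvdn_mul; apply: prime_dvd_pnat => //; by rewrite order_gt1.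
Qed.

Lemma elt_of_order (G : {group gT}) g d : g \in G -> (d %| #[g])%N ->
  exists2 x, x \in G & #[x] = d.
Proof.
move=> gG dv; have [k hk] := dvdnP dv.
have dg : (k %| #[g])%N by rewrite hk dvdn_mulr.
exists (g ^+ k); first by rewrite groupX.
rewrite orderXdiv // hk mulKn //.
by case: k hk {dg} => //; rewrite mul0n => h; move: (order_gt0 g); rewrite h.
Qed.

End Aux.
Section Aux2.
Variable gT : finGroupType.
Local Open Scope group_scope.

Lemma p'_ndvd (N : {group gT}) p : prime p -> p^'.-group N -> ~~ (p %| #|N|)%N.
Proof. by move=> pP; rewrite /pgroup p'natE. Qed.

Lemma Op_quo_ntriv (K : {group gT}) p : solvable K -> prime p -> (p %| #|K|)%N ->
  'O_p(K / 'O_p^'(K)) != 1.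
Proof.
move=> solK pP pK.
set N := 'O_p^'(K).
have nNK : K \subset 'N(N) := normal_norm (pcore_normal _ _).
have pKb : (p %| #|K / N|)%N.
  move: pK; rewrite -(Lagrange (normal_sub (pcore_normal p^' K))) -card_quotient //.
  rewrite Euclid_dvdM // => /orP [|] //.
  by move/negP: (p'_ndvd pP (pcore_pgroup p^' K)).
have ntKb : (K / N)%G != 1 :> {set _}.
  apply/negP => /eqP e; move: pKb; rewrite e cards1 dvdn1 => /eqP e1.
  by move: (prime_gt1 pP); rewrite e1.
have [H [sHK nHK ntH /is_abelemP [r rP /abelem_pgroup rH]]] :=
  solvable_norm_abelem (quotient_sol N solK) (normal_refl _) ntKb.
case: (eqVneq r p) => [erp|nrp].
  subst r; apply: contraNneq ntH => e; rewrite -subG1 -e; exact: pcore_max.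
exfalso.
have : H \subset 'O_p^'(K / N).
  apply: pcore_max nHK; apply: sub_pgroup rH => x; rewrite !inE => /eqP ->.
  by [].
by rewrite trivg_pcore_quotient subG1 (negPf ntH).
Qed.
End Aux2.
Section Aux3.
Variable gT : finGroupType.
Local Open Scope group_scope.

Lemma key (G K : {group gT}) p q :
  K <| G -> solvable K -> prime p -> (p %| #|K|)%N -> prime q -> (q %| #|G|)%N ->
  p != q ->
  (forall k, 0 < k -> k <= logn p #|G| -> ~~ (q %| p ^ k - 1))%N ->
  ~~ (p %| q ^ logn q #|G| - 1)%N ->
  exists2 x, x \in G & #[x] = (p * q)%N.
Proof.
move=> nKG solK pP pK qP qG pq hq hp.
set N := 'O_p^'(K).
have nNG : N <| G := char_normal_trans (pcore_char _ _) nKG.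
have p'N : p^'.-group N := pcore_pgroup _ _.
have sNG := normal_sub nNG.
have pG : (p %| #|G|)%N := dvdn_trans pK (cardSg (normal_sub nKG)).
have [S sylS] := Sylow_exists q G.
have sSG := pHall_sub sylS.
have qS := pHall_pgroup sylS.
case sSN: (S \subset N).
  have sylSN : q.-Sylow(N) S := pHall_subl sSN sNG sylS.
  have frat := Frattini_arg nNG sylSN.
  have pNS : (p %| #|'N_G(S)|)%N.
    have := mul_cardG N 'N_G(S); rewrite frat => e.
    have : (p %| #|N| * #|'N_G(S)|)%N by rewrite e dvdn_mulr.
    rewrite Euclid_dvdM // => /orP [|] //.
    by move/negP: (p'_ndvd pP p'N).
  have [x xN ox] := Cauchy pP pNS.
  have /setIP [xG xNS] := xN.
  have px : p.-elt x by rewrite /p_elt ox pnat_id.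
  have ndv : ~~ (p %| #|S| - 1)%N by rewrite (card_Hall sylS) p_part.
  have [s sS [s1 csx]] := fix_elt pP px xNS ndv.
  have x1 : x != 1 by rewrite -order_gt1 ox prime_gt1.
  have := order_mul_pq pP qP pq px (mem_p_elt qS sS) x1 s1 (commute_sym csx).
  apply: elt_of_order; rewrite groupM //; exact: (subsetP sSG).
move/negbT: sSN => /subsetPn [y yS yNN].
have yG : y \in G := subsetP sSG _ yS.
have nNG' : G \subset 'N(N) := normal_norm nNG.
have yN : y \in 'N(N) := subsetP nNG' _ yG.
set yb := coset N y.
have yb1 : yb != 1.
  by apply/eqP => e; move/negP: yNN; apply; exact: coset_idr yN e.
have qyb : q.-elt yb := morph_p_elt (coset_morphism N) yN (mem_p_elt qS yS).
set V := 'O_p(K / N).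
have nVG : V <| G / N := char_normal_trans (pcore_char _ _) (quotient_normal N nKG).
have ybG : yb \in G / N := mem_quotient N yG.
have ybNV : yb \in 'N(V) := subsetP (normal_norm nVG) _ ybG.
have ntV : V != 1 := Op_quo_ntriv solK pP pK.
have pV : p.-group V := pcore_pgroup _ _.
have ndv : ~~ (q %| #|V| - 1)%N.
  rewrite (card_pgroup pV); apply: hq.
    rewrite lt0n; apply/negP => /eqP e.
    by move/negP: ntV; apply; rewrite trivg_card1 (card_pgroup pV) e.
  apply: dvdn_leq_log; first exact: cardG_gt0.
  apply: dvdn_trans (cardSg (pcore_sub _ _)) _.
  rewrite card_quotient; last exact: subset_trans (normal_sub nKG) nNG'.
  exact: dvdn_trans (dvdn_indexg _ _) (cardSg (normal_sub nKG)).
have [vb vbV [vb1 cvy]] := fix_elt qP qyb ybNV ndv.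
have pvb : p.-elt vb := mem_p_elt pV vbV.
have hd := order_mul_pq pP qP pq pvb qyb vb1 yb1 cvy.
have vbG : vb \in G / N.
  apply: (subsetP (quotientS N (normal_sub nKG))).
  exact: (subsetP (pcore_sub p (K / N)) _ vbV).
have : vb * yb \in G / N by rewrite groupM.
case/morphimP => g gN gG eg.
apply: (elt_of_order gG); apply: dvdn_trans hd _.
by rewrite eg; exact: morph_order.
Qed.
End Aux3.

Lemma pow_sub1_gt0 p k : prime p -> 0 < k -> 0 < p ^ k - 1.
Proof.
move=> pP k0; rewrite subn_gt0 -{1}(expn0 p) ltn_exp2l //; exact: prime_gt1.
Qed.

Theorem theorem2p12 (gT : finGroupType) (G K : {group gT}) (p : nat) :
  (K <| G)%g -> solvable K -> p \in piG G ->
  gk_deg G p < size (Hset G p) ->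
  p \notin piG K.
Proof.
move=> nKG solK pG hlt; apply/negP => pK.
move: pK; rewrite /piG mem_primes => /and3P [pP _ pdK].
have allH : all (gk_adj G p) (Hset G p).
  apply/allP => q; rewrite /Hset mem_filter => /andP [pbar qth].
  move: qth; rewrite /theta mem_filter => /andP [/andP [qp hall] qpi].
  move: pbar; rewrite /thetabar mem_filter => /andP [/andP [pq hpb] _].
  have qpi' := qpi; move: qpi'; rewrite /piG mem_primes => /and3P [qP _ qdG].
  rewrite /gk_adj pq /=.
  have hq : forall k, 0 < k -> k <= logn p #|G| -> ~~ (q %| p ^ k - 1).
    move=> [|i] // _ ilt.
    move/forallP: hall => /(_ (Ordinal ilt)).
    by rewrite mem_primes qP pow_sub1_gt0.
  have hp : ~~ (p %| q ^ logn q #|G| - 1).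
    move: hpb; rewrite mem_primes pP pow_sub1_gt0 //.
    by rewrite logn_gt0.
  have [x xG ox] := key nKG solK pP pdK qP qdG pq hq hp.
  by apply/existsP; exists x; rewrite xG ox eqxx.
have e : size (Hset G p) = count (gk_adj G p) (Hset G p).
  by move: allH; rewrite all_count => /eqP ->.
have le : count (gk_adj G p) (Hset G p) <= gk_deg G p.
  rewrite /Hset /theta -filter_predI count_filter /gk_deg.
  by apply: sub_count => x /andP [].
by rewrite ltnNge e le in hlt.
Qed.
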